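(* Let $\mathcal A$ be a completely positive trace-preserving map on $M_D$ and let $\mathcal B,\mathcal C,\mathcal D$ be completely positive maps on $M_D$ with $\epsilon=\max(\|\mathcal B\|_{1\to1},\|\mathcal C\|_{1\to1},\|\mathcal D\|_{1\to1})$. Define the double-step maps $\mathcal A'=(\mathcal A^2+\mathcal B^2)^2+(\mathcal C^2+\mathcal D^2)^2$, $\mathcal B'=\{\mathcal A,\mathcal B\}^2+\{\mathcal C,\mathcal D\}^2$, $\mathcal C'=\{\mathcal A^2+\mathcal B^2,\mathcal C^2+\mathcal D^2\}$, $\mathcal D'=\{\{\mathcal A,\mathcal B\},\{\mathcal C,\mathcal D\}\}$. Then: 1. $\max(\|\mathcal B'\|_{1\to1},\|\mathcal C'\|_{1\to1},\|\mathcal D'\|_{1\to1})\le 4(\epsilon^2+\epsilon^4)$. 2. $\|\mathcal A'-\mathcal A^4\|_{1\to1}\le 2\epsilon^2+5\epsilon^4$. 3. Suppose in addition that $\lambda$ is the spectral radius of $\mathcal A'$ and that $\xi$ is positive definite with $\mathcal A'^\dagger(\xi)=\lambda\xi$. Then $\lambda\ge1$, and the regauged maps $\mathcal X_{\rm new}=\lambda^{-1}\mathcal S\mathcal X'\mathcal S^{-1}$, with $\mathcal S(\rho)=\xi^{1/2}\rho\,\xi^{1/2}$, satisfy $$\max(\|\mathcal B_{\rm new}\|_{1\to1},\|\mathcal C_{\rm new}\|_{1\to1},\|\mathcal D_{\rm new}\|_{1\to1})\le 4\,\kappa(\mathcal S)\,(\epsilon^2+\epsilon^4),$$ where $\kappa(\mathcal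 S)=\|\mathcal S\|_{1\to1}\|\mathcal S^{-1}\|_{1\to1}$.
   Context: Notation: $M_D$ is the space of complex $D\times D$ matrices. For a linear map $\mathcal F$ on $M_D$, $\|\mathcal F\|_{1\to1}:=\sup_{\sigma\ne0}\|\mathcal F(\sigma)\|_1/\|\sigma\|_1$, where $\|\cdot\|_1$ is the trace norm. The dual map $\mathcal F^\dagger$ is defined by $\mathrm{Tr}(A\,\mathcal F(B))=\mathrm{Tr}(\mathcal F^\dagger(A)B)$. Products of maps denote composition and $\{\mathcal X,\mathcal Y\}=\mathcal X\mathcal Y+\mathcal Y\mathcal X$. *)

(* Defs.v *)
From HB Require Import structures.
From mathcomp Require Import all_boot all_order all_algebra.
Set Implicit Arguments. Unset Strict Implicit. Unset Printing Implicit Defensive.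
Import Order.TTheory GRing.Theory Num.Theory.
Local Open Scope ring_scope.

Section Defs.
Variables (C : numClosedFieldType) (D : nat).

Definition adjmx (A : 'M[C]_D) : 'M[C]_D := (map_mx Num.conj A)^T.

Definition eigs (M : 'M[C]_D) : seq C := projT1 (closed_field_poly_normal (char_poly M)).

(* trace norm: sum of the singular values, i.e. of sqrt of eigenvalues of A^* A *)
Definition trnorm (A : 'M[C]_D) : C := \sum_(x <- eigs (adjmx A *m A)) sqrtC x.

Definition psd (A : 'M[C]_D) : Prop :=
  forall v : 'cV[C]_D, 0 <= (((map_mx Num.conj v)^T *m A *m v) 0 0).
Definition posdef (A : 'M[C]_D) : Prop :=
  forall v : 'cV[C]_D, v != 0 -> 0 < (((map_mx Num.conj v)^T *m A *m v) 0 0).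

Definition mapT := 'M[C]_D -> 'M[C]_D.
Definition lin_map (F : mapT) : Prop :=
  forall (a : C) (x y : 'M[C]_D), F (a *: x + y) = a *: F x + F y.
Definition addm (F G : mapT) : mapT := fun x => F x + G x.
Definition subm (F G : mapT) : mapT := fun x => F x - G x.
Definition compm (F G : mapT) : mapT := fun x => F (G x).
Definition anticomm (F G : mapT) : mapT := addm (compm F G) (compm G F).
Definition sqm (F : mapT) : mapT := compm F F.

(* an element of M_D (x) M_k written as a k x k array of D x D blocks is PSD *)
Definition psd_block (k : nat) (X : 'I_k -> 'I_k -> 'M[C]_D) : Prop :=
  forall v : 'I_k -> 'cV[C]_D,
    0 <= \sum_(i < k) \sum_(j < k)
           (((map_mx Num.conj (v i))^T *m X i j *m v j) 0 0).

(* complete positivity: F (x) id_k is positive for every k *)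
Definition CP (F : mapT) : Prop :=
  lin_map F /\
  forall (k : nat) (X : 'I_k -> 'I_k -> 'M[C]_D),
    psd_block X -> psd_block (fun i j => F (X i j)).

Definition trace_preserving (F : mapT) : Prop := forall x, \tr (F x) = \tr x.

(* dual map: Tr(Y F(B)) = Tr(F^dag(Y) B); explicit matrix of F^dag(Y) *)
Definition dualm (F : mapT) : mapT :=
  fun Y => \matrix_(i, j) \tr (Y *m F (delta_mx j i)).

Definition norm11_le (F : mapT) (c : C) : Prop :=
  forall s : 'M[C]_D, trnorm (F s) <= c * trnorm s.

Definition is_norm11 (F : mapT) (c : C) : Prop :=
  0 <= c /\ norm11_le F c /\ (forall c', 0 <= c' -> norm11_le F c' -> c <= c').

Definition is_eigenvalue (F : mapT) (l : C) : Prop :=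
  exists X : 'M[C]_D, X != 0 /\ F X = l *: X.

Definition is_spectral_radius (F : mapT) (r : C) : Prop :=
  (exists l, is_eigenvalue F l /\ `|l| = r) /\
  (forall l, is_eigenvalue F l -> `|l| <= r).

End Defs.

(* Main.v *)
Require Import Defs.
From HB Require Import structures.
From mathcomp Require Import all_boot all_order all_algebra.
From mathcomp Require Import ring.
Import Order.TTheory GRing.Theory Num.Theory.
Local Open Scope ring_scope.

Set Implicit Arguments. Unset Strict Implicit. Unset Printing Implicit Defensive.

Section Basic.
Variable C : numClosedFieldType.

Definition adj m n (A : 'M[C]_(m,n)) : 'M[C]_(n,m) := (map_mx Num.conj A)^T.

Lemma adjE m n (A : 'M[C]_(m,n)) i j : adj A i j = (A j i)^*.
Proof. by rewrite !mxE. Qed.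
Lemma adjK m n (A : 'M[C]_(m,n)) : adj (adj A) = A.
Proof. by apply/matrixP=> i j; rewrite !mxE conjCK. Qed.
Lemma adjM m n p (A : 'M[C]_(m,n)) (B : 'M[C]_(n,p)) : adj (A *m B) = adj B *m adj A.
Proof. by rewrite /adj map_mxM trmx_mul. Qed.
Lemma adjD m n (A B : 'M[C]_(m,n)) : adj (A + B) = adj A + adj B.
Proof. by apply/matrixP=> i j; rewrite !mxE rmorphD. Qed.
Lemma adjN m n (A : 'M[C]_(m,n)) : adj (- A) = - adj A.
Proof. by apply/matrixP=> i j; rewrite !mxE rmorphN. Qed.
Lemma adjB m n (A B : 'M[C]_(m,n)) : adj (A - B) = adj A - adj B.
Proof. by rewrite adjD adjN. Qed.
Lemma adjmZ m n a (A : 'M[C]_(m,n)) : adj (a *: A) = a^* *: adj A.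
Proof. by apply/matrixP=> i j; rewrite !mxE rmorphM. Qed.
Lemma adjm1 n : adj (1%:M : 'M[C]_n) = 1%:M.
Proof. by apply/matrixP=> i j; rewrite !mxE eq_sym; case: eqP; rewrite ?rmorph1 ?rmorph0. Qed.
Lemma adj0 m n : adj (0 : 'M[C]_(m,n)) = 0.
Proof. by apply/matrixP=> i j; rewrite !mxE rmorph0. Qed.
Lemma adj_diag n (d : 'rV[C]_n) : adj (diag_mx d) = diag_mx (map_mx Num.conj d).
Proof. by rewrite /adj map_diag_mx tr_diag_mx. Qed.
Lemma adj_tc m n (A : 'M[C]_(m,n)) : adj A = map_mx Num.conj A^T.
Proof. by rewrite /adj map_trmx. Qed.

Lemma quad_adj_ge0 m n (X : 'M[C]_(m,n)) k : 0 <= (adj X *m X) k k.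
Proof.
rewrite !mxE; apply: sumr_ge0 => j _; rewrite !mxE mulrC; exact: mul_conjC_ge0.
Qed.

Lemma quad_adj_eq0 m n (X : 'M[C]_(m,n)) k : (adj X *m X) k k = 0 -> col k X = 0.
Proof.
rewrite !mxE => /eqP; rewrite psumr_eq0 => [/allP H|j _]; last first.
  by rewrite !mxE mulrC mul_conjC_ge0.
apply/matrixP=> i j; rewrite !mxE.
have := H i (mem_index_enum _); rewrite /= !mxE mulrC mul_conjC_eq0.
by move/eqP.
Qed.

End Basic.

Section Spec.
Variable C : numClosedFieldType.

Lemma herm_spectral n (N : 'M[C]_n) : adj N = N ->
  exists W : 'M[C]_n, exists d : 'rV[C]_n,
   [/\ adj W *m W = 1%:M, W *m adj W = 1%:M & N = W *m diag_mx d *m adj W].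
Proof.
move=> hN.
have nN : N \is normalmx.
  by apply/normalmxP; rewrite -adj_tc hN.
have Pu := spectral_unitarymx N.
have := orthomx_spectralP nN; rewrite invmx_unitary //.
set P := spectralmx N => eN.
exists (adj P), (spectral_diag N); rewrite adjK; split.
- by move/unitarymxP: Pu; rewrite -adj_tc.
- have := Pu; rewrite -trmxC_unitary => /unitarymxP.
  by rewrite -!adj_tc adjK.
- by rewrite {1}eN -adj_tc.
Qed.

End Spec.

Section CharPoly.
Variable C : numClosedFieldType.

Lemma char_poly_conj n (W M : 'M[C]_n) : adj W *m W = 1%:M -> W *m adj W = 1%:M ->
  char_poly (W *m M *m adj W) = char_poly M.
Proof.
move=> h1 h2; rewrite /char_poly /char_poly_mx.
set f := map_mx (@polyC C).
have -> : 'X%:M - f (W *m M *m adj W) = f W *m ('X%:M - f M) *m f (adj W).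
  rewrite mulmxBr mulmxBl /f !map_mxM; congr (_ - _).
  by rewrite scalar_mxC -mulmxA -map_mxM h2 map_mx1 mulmx1.
rewrite !det_mulmx mulrC mulrA -det_mulmx -map_mxM h1 map_mx1 det1 mul1r.
done.
Qed.

Lemma eigs_diag n (W : 'M[C]_n) (d : 'rV[C]_n) : adj W *m W = 1%:M -> W *m adj W = 1%:M ->
  perm_eq (eigs (W *m diag_mx d *m adj W)) [seq d 0 i | i <- enum 'I_n].
Proof.
move=> h1 h2; apply: prod_XsubC_eq.
rewrite /eigs; case: closed_field_poly_normal => r /= hr.
rewrite char_poly_conj // in hr.
have hm := char_poly_monic (diag_mx d); rewrite (monicP hm) scale1r in hr.
rewrite -hr char_poly_trig ?diag_mx_is_trig // big_map big_enum /=.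
by apply: eq_bigr => i _; rewrite mxE eqxx mulr1n.
Qed.

Lemma trnorm_spec n (X : 'M[C]_n) (W : 'M[C]_n) (d : 'rV[C]_n) :
  adj W *m W = 1%:M -> W *m adj W = 1%:M -> adjmx X *m X = W *m diag_mx d *m adj W ->
  trnorm X = \sum_i sqrtC (d 0 i).
Proof.
move=> h1 h2 hN; rewrite /trnorm hN (perm_big _ (eigs_diag d h1 h2)) big_map big_enum.
done.
Qed.

End CharPoly.

Section CS.
Variable C : numClosedFieldType.

Lemma cs_entry m n p (A : 'M[C]_(m,n)) (B : 'M[C]_(n,p)) i j :
  `|(A *m B) i j| ^+ 2 <= (A *m adj A) i i * (adj B *m B) j j.
Proof.
have := CauchySchwarz (@dotmx C n) (row i A) (row j (adj B)).
case=> H _.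
have e1 : dotmx (row i A) (row j (adj B)) = (A *m B) i j.
  rewrite dotmxE !mxE; apply: eq_bigr => k _; rewrite !mxE conjCK //.
have e2 : dotmx (row i A) (row i A) = (A *m adj A) i i.
  rewrite dotmxE !mxE; apply: eq_bigr => k _; rewrite !mxE //.
have e3 : dotmx (row j (adj B)) (row j (adj B)) = (adj B *m B) j j.
  rewrite dotmxE !mxE; apply: eq_bigr => k _; rewrite !mxE conjCK mulrC //.
by rewrite -e1 -e2 -e3.
Qed.

End CS.

Section TN.
Variable C : numClosedFieldType.
Variable n : nat.
Implicit Types X G : 'M[C]_n.

Lemma adjmxE X : adjmx X = adj X. Proof. by []. Qed.

Definition contr G := exists V : 'M[C]_n, 1%:M - G *m adj G = V *m adj V.

Lemma diagM (a b : 'rV[C]_n) :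
  diag_mx a *m diag_mx b = diag_mx (\row_k (a 0 k * b 0 k)).
Proof.
apply/matrixP=> i j; rewrite mul_diag_mx !mxE.
by case: eqP => [->|]; rewrite ?mulr1n ?mulr0n ?mulr0.
Qed.

Lemma XW_spec X : exists W : 'M[C]_n, exists d : 'rV[C]_n,
  [/\ adj W *m W = 1%:M, W *m adj W = 1%:M, adj X *m X = W *m diag_mx d *m adj W,
      (forall k, 0 <= d 0 k) & trnorm X = \sum_i sqrtC (d 0 i)].
Proof.
have hN : adj (adj X *m X) = adj X *m X by rewrite adjM adjK.
have [W [d [h1 h2 hN']]] := herm_spectral hN.
exists W, d; split => //; last exact: (trnorm_spec h1 h2 hN').
move=> k.
have : adj (X *m W) *m (X *m W) = diag_mx d.
  by rewrite adjM -mulmxA (mulmxA (adj X)) hN' !mulmxA h1 mul1mx -mulmxA h1 mulmx1.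
move/(congr1 (fun M : 'M[C]_n => M k k)) => /= e.
by move: e; rewrite [diag_mx d k k]mxE eqxx mulr1n => <-; exact: quad_adj_ge0.
Qed.

Lemma trnorm_ge0 X : 0 <= trnorm X.
Proof.
have [W [d [_ _ _ hd ->]]] := XW_spec X.
by apply: sumr_ge0 => i _; rewrite sqrtC_ge0.
Qed.

Lemma trnorm_ge G X : contr G -> `|\tr (G *m X)| <= trnorm X.
Proof.
move=> [V hV].
have [W [d [h1 h2 hN hd ->]]] := XW_spec X.
have -> : \tr (G *m X) = \tr ((adj W *m G) *m (X *m W)).
  by rewrite [RHS]mxtrace_mulC -mulmxA (mulmxA W) h2 mul1mx mxtrace_mulC.
rewrite /mxtrace; apply: le_trans (ler_norm_sum _ _ _) _.
apply: ler_sum => k _.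
set A := adj W *m G; set B := X *m W.
have hB : adj B *m B = diag_mx d.
  by rewrite /B adjM -mulmxA (mulmxA (adj X)) hN !mulmxA h1 mul1mx -mulmxA h1 mulmx1.
have hA : A *m adj A = 1%:M - adj (adj V *m W) *m (adj V *m W).
  rewrite /A adjM adjK adjM adjK !mulmxA -(mulmxA (adj W)) -(mulmxA _ V).
  have -> : G *m adj G = 1%:M - V *m adj V by rewrite -hV opprB addrC subrK.
  by rewrite mulmxBr mulmx1 mulmxBl h1.
have := cs_entry A B k k; rewrite hB hA.
set q := adj (adj V *m W) *m (adj V *m W); set t := (A *m B) k k.
rewrite !mxE eqxx !mulr1n => H.
have q0 : 0 <= q k k by apply: quad_adj_ge0.
have H2 : `|t| ^+ 2 <= d 0 k.
  apply: le_trans H _; rewrite -[X in _ <= X]mul1r ler_wpM2r //.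
  by rewrite gerBl; have := quad_adj_ge0 (adj V *m W) k; rewrite mxE.
rewrite -(sqrCK (normr_ge0 t)) ler_sqrtC // nnegrE ?exprn_ge0 //.

Qed.

Lemma inv_sq (s : C) : s^-1 * s ^+ 2 = s.
Proof.
have [->|s0] := eqVneq s 0; first by rewrite invr0 mul0r.
by rewrite expr2 mulrA mulVf // mul1r.
Qed.

Lemma trnorm_dual X : exists G, contr G /\ \tr (G *m X) = trnorm X.
Proof.
have [W [d [h1 h2 hN hd ->]]] := XW_spec X.
pose e := \row_k (sqrtC (d 0 k))^-1.
have ee : map_mx Num.conj e = e.
  apply/matrixP=> i j; rewrite !mxE conj_Creal //.
  by apply: ger0_real; rewrite invr_ge0 sqrtC_ge0.
have eD : adj W *m adj X *m X *m W = diag_mx d.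
  by rewrite -(mulmxA (adj W)) hN !mulmxA h1 mul1mx -mulmxA h1 mulmx1.
exists (W *m diag_mx e *m adj W *m adj X); split; last first.
  rewrite -!mulmxA mxtrace_mulC !mulmxA.
  have -> : diag_mx e *m adj W *m adj X *m X *m W = diag_mx e *m diag_mx d.
    by rewrite -eD !mulmxA.
  rewrite diagM mxtrace_diag.
  apply: eq_bigr => k _; rewrite !mxE.
  by rewrite -{2}(sqrtCK (d 0 k)) inv_sq.
pose g := \row_k ((d 0 k == 0)%:R : C).
exists (W *m diag_mx g).
have hG : W *m diag_mx e *m adj W *m adj X *m adj (W *m diag_mx e *m adj W *m adj X)
   = W *m (diag_mx e *m (adj W *m adj X *m X *m W) *m diag_mx e) *m adj W.
  by rewrite !adjM !adjK adj_diag ee !mulmxA.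
rewrite hG eD !diagM adjM adj_diag !mulmxA.
have -> : (1%:M : 'M[C]_n) = W *m 1%:M *m adj W by rewrite mulmx1 h2.
rewrite -mulmxBl -mulmxBr -(mulmxA W (diag_mx g)); congr (_ *m _ *m _).
rewrite diagM; apply/matrixP=> i j; rewrite !mxE.
case: (eqVneq i j) => [->|ne]; last by rewrite !mulr0n subr0.
rewrite ?eqxx !mulr1n.
have [d0|dn0] := eqVneq (d 0 j) 0.
  by rewrite d0 sqrtC0 invr0 !mul0r subr0 /= mulr1n rmorph1 mulr1.
rewrite /= mulr0n rmorph0 mulr0 mulrAC -invfM -expr2 sqrtCK mulVf // subrr //.
Qed.

End TN.

Section Tri.
Variable C : numClosedFieldType.
Variable n : nat.
Implicit Types X Y G : 'M[C]_n.

Lemma trnorm_triangle X Y : trnorm (X + Y) <= trnorm X + trnorm Y.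
Proof.
have [G [cG e]] := trnorm_dual (X + Y).
rewrite -[trnorm (X + Y)]ger0_norm ?trnorm_ge0 // -e mulmxDr mxtraceD.
apply: le_trans (ler_normD _ _) _.
by apply: lerD; apply: trnorm_ge.
Qed.

Lemma trnorm_scale (a : C) X : trnorm (a *: X) <= `|a| * trnorm X.
Proof.
have [G [cG e]] := trnorm_dual (a *: X).
rewrite -[trnorm (a *: X)]ger0_norm ?trnorm_ge0 // -e -scalemxAr mxtraceZ normrM.
by apply: ler_wpM2l => //; apply: trnorm_ge.
Qed.

Lemma trnorm_opp X : trnorm (- X) <= trnorm X.
Proof.
by rewrite -scaleN1r; apply: le_trans (trnorm_scale _ _) _; rewrite normrN normr1 mul1r.
Qed.

Lemma trnorm_sub X Y : trnorm (X - Y) <= trnorm X + trnorm Y.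
Proof.
by apply: le_trans (trnorm_triangle _ _) _; rewrite lerD2l trnorm_opp.
Qed.

Implicit Types F H : mapT C n.

Lemma nl_comp F H a b : norm11_le F a -> norm11_le H b -> 0 <= a ->
  norm11_le (compm F H) (a * b).
Proof.
move=> hF hH a0 s; rewrite /compm; apply: le_trans (hF _) _.
by rewrite -mulrA ler_wpM2l.
Qed.

Lemma nl_add F H a b : norm11_le F a -> norm11_le H b -> norm11_le (addm F H) (a + b).
Proof.
move=> hF hH s; rewrite /addm; apply: le_trans (trnorm_triangle _ _) _.
by rewrite mulrDl lerD.
Qed.

Lemma nl_sub F H a b : norm11_le F a -> norm11_le H b -> norm11_le (subm F H) (a + b).
Proof.
move=> hF hH s; rewrite /subm; apply: le_trans (trnorm_sub _ _) _.
by rewrite mulrDl lerD.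
Qed.

Lemma nl_mono F a b : a <= b -> norm11_le F a -> norm11_le F b.
Proof.
move=> ab hF s; apply: le_trans (hF s) _.
by rewrite ler_wpM2r // trnorm_ge0.
Qed.

Lemma nl_ext F H a : (forall x, F x = H x) -> norm11_le F a -> norm11_le H a.
Proof. by move=> e hF s; rewrite -e. Qed.

Lemma nl_scale F (c a : C) : norm11_le F a -> norm11_le (fun x => c *: F x) (`|c| * a).
Proof.
move=> hF s; apply: le_trans (trnorm_scale _ _) _.
by rewrite -mulrA ler_wpM2l.
Qed.

Lemma lin0 F : lin_map F -> F 0 = 0.
Proof.
move=> h; have := h 1 0 0; rewrite !scale1r addr0 => e.
by apply: (@addrI _ (F 0)); rewrite addr0 -e.
Qed.

Lemma linD F : lin_map F -> forall x y, F (x + y) = F x + F y.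
Proof. by move=> h x y; have := h 1 x y; rewrite !scale1r. Qed.

Lemma linZ F : lin_map F -> forall a x, F (a *: x) = a *: F x.
Proof. by move=> h a x; rewrite -[a *: x]addr0 h lin0 // addr0. Qed.

Lemma linN F : lin_map F -> forall x, F (- x) = - F x.
Proof. by move=> h x; rewrite -scaleN1r linZ // scaleN1r. Qed.

Lemma linB F : lin_map F -> forall x y, F (x - y) = F x - F y.
Proof. by move=> h x y; rewrite linD // linN. Qed.

Lemma linS F : lin_map F -> forall I (r : seq I) (P : pred I) (f : I -> 'M[C]_n),
  F (\sum_(i <- r | P i) f i) = \sum_(i <- r | P i) F (f i).
Proof.
move=> h I r P f; elim/big_rec2: _ => [|i y1 y2 _ <-]; first exact: lin0.
exact: linD.
Qed.

End Tri.

Section CPL.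
Variable C : numClosedFieldType.

Lemma conj_pair (al be : C) : al + be \is Num.real -> 'i * (al - be) \is Num.real ->
  be = al^*.
Proof.
move=> /conj_Creal e1 /conj_Creal e2.
rewrite rmorphD /= in e1; rewrite rmorphM rmorphB /= conjCi in e2.
set p := al^* in e1 e2 *; set q := be^* in e1 e2.
have e3 : p - q = be - al.
  have ii : 'i * 'i = - 1 :> C by rewrite -expr2 sqrCi.
  have h := congr1 (fun x => 'i * x) e2; simpl in h.
  have l1 : 'i * (- 'i * (p - q)) = - ('i * 'i) * (p - q) by ring.
  have l2 : 'i * ('i * (al - be)) = ('i * 'i) * (al - be) by ring.
  rewrite l1 l2 ii opprK mul1r in h; rewrite h; ring.
have two : (2 : C) != 0 by rewrite pnatr_eq0.
apply: (mulfI two).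
have -> : 2 * be = (al + be) + (be - al) by ring.
by rewrite -e1 -e3; ring.
Qed.

Lemma m11 (P Q : 'M[C]_1) : (P *m Q) 0 0 = P 0 0 * Q 0 0.
Proof. by rewrite !mxE big_ord1. Qed.

Lemma adj_scalar n (c : C) : adj (c%:M : 'M[C]_n) = c^*%:M.
Proof.
apply/matrixP=> i j; rewrite !mxE eq_sym.
by case: (i == j); rewrite ?mulr1n ?mulr0n ?rmorph0.
Qed.

Variable n : nat.

Lemma quad_delta (Z : 'M[C]_n) j :
  (adj (delta_mx j 0 : 'cV[C]_n) *m Z *m (delta_mx j 0 : 'cV[C]_n)) 0 0 = Z j j.
Proof.
have -> : adj (delta_mx j 0 : 'cV[C]_n) = (delta_mx 0 j : 'rV[C]_n).
  apply/matrixP=> i k; rewrite !mxE.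
  by rewrite rmorph_nat andbC.
by rewrite -(rowE j Z) -(colE j (row j Z)) !mxE.
Qed.

Lemma sum_quad (M K N : 'M[C]_n) :
  \sum_j (adj (M *m (delta_mx j 0 : 'cV[C]_n)) *m K *m (N *m (delta_mx j 0 : 'cV[C]_n))) 0 0
  = \tr (adj M *m K *m N).
Proof.
apply: eq_bigr => j _; rewrite adjM !mulmxA -(mulmxA _ (adj M)) -(mulmxA _ (adj M *m K)).
by rewrite -quad_delta !mulmxA.
Qed.

Lemma psd_tr (Q : 'M[C]_n) (V : 'M[C]_n) : psd Q -> 0 <= \tr (adj V *m Q *m V).
Proof.
move=> hQ; rewrite -sum_quad; apply: sumr_ge0 => j _; exact: hQ.
Qed.

Lemma CP_psd (F : mapT C n) X : CP F -> psd X -> psd (F X).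
Proof.
move=> [_ hcp] hX v.
have hb : psd_block (fun (_ _ : 'I_1) => X).
  by move=> w; rewrite big_ord1 big_ord1; apply: hX.
have := hcp 1 _ hb (fun _ => v).
by rewrite big_ord1 big_ord1.
Qed.

End CPL.

Section R1.
Variable C : numClosedFieldType.
Variable n : nat.

Lemma rank1_block (a b : 'cV[C]_n) :
  psd_block (fun i j : 'I_2 => (if (val i == 0)%N then a else b) *m
                               adj (if (val j == 0)%N then a else b)).
Proof.
move=> v; set c := fun i : 'I_2 => if (val i == 0)%N then a else b.
pose s i := (adj (c i) *m v i) 0 0.
have e : forall i j, (adj (v i) *m (c i *m adj (c j)) *m v j) 0 0 = (s i)^* * s j.
  move=> i j; rewrite mulmxA -mulmxA m11 /s; congr (_ * _).
  by rewrite -adjE adjM adjK.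
under eq_bigr do under eq_bigr do rewrite e.
rewrite -big_distrlr /= -rmorph_sum mulrC; exact: mul_conjC_ge0.
Qed.

Lemma cp_rank1 (F : mapT C n) (G : 'M[C]_n) (a b : 'cV[C]_n) :
  CP F -> trace_preserving F -> contr G ->
  `|\tr (G *m F (a *m adj b))| *+ 2 <= (adj a *m a) 0 0 + (adj b *m b) 0 0.
Proof.
move=> hF htp [V hV].
have hpsd := hF.2 2 _ (rank1_block a b).
set P := F (a *m adj a); set Z := F (a *m adj b).
set Z' := F (b *m adj a); set Q := F (b *m adj b).
have hq : forall x y : 'cV[C]_n, 0 <= (adj x *m P *m x) 0 0 + (adj x *m Z *m y) 0 0
     + ((adj y *m Z' *m x) 0 0 + (adj y *m Q *m y) 0 0).
  move=> x y; have := hpsd (fun i : 'I_2 => if (val i == 0)%N then x else y).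
  by rewrite !big_ord_recl !big_ord0 !addr0 /=.
have z00 : (0 : 'M[C]_1) 0 0 = 0 by rewrite mxE.
have Qpsd : psd Q.
  move=> y; have := hq 0 y.
  by rewrite adj0 ?mul0mx ?mulmx0 ?mul0mx z00 !add0r.
have hT : forall th : C, th^* * th = 1 ->
    0 <= \tr P - th^* * \tr (Z *m G) - th * \tr (adj G *m Z') + \tr (adj G *m Q *m G).
  move=> th hth.
  have := @sumr_ge0 _ _ (index_enum 'I_n) xpredT
     (fun j => (adj ((-th)%:M *m (delta_mx j 0 : 'cV[C]_n)) *m P *m ((-th)%:M *m (delta_mx j 0 : 'cV[C]_n))) 0 0
      + (adj ((-th)%:M *m (delta_mx j 0 : 'cV[C]_n)) *m Z *m (G *m (delta_mx j 0 : 'cV[C]_n))) 0 0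
      + ((adj (G *m (delta_mx j 0 : 'cV[C]_n)) *m Z' *m ((-th)%:M *m (delta_mx j 0 : 'cV[C]_n))) 0 0
      + (adj (G *m (delta_mx j 0 : 'cV[C]_n)) *m Q *m (G *m (delta_mx j 0 : 'cV[C]_n))) 0 0))
     (fun j _ => hq _ _).
  rewrite !big_split /= !sum_quad !adj_scalar !mul_mx_scalar !mul_scalar_mx.
  rewrite -!scalemxAl !mxtraceZ rmorphN.
  have E : forall x, - th * (- th^* * x) = x.
    by move=> x; rewrite mulrA mulrNN [th * _]mulrC hth mul1r.
  rewrite E => h; apply: le_trans h _; rewrite le_eqVlt; apply/orP; left; apply/eqP.
  ring.
have trP : \tr P = (adj a *m a) 0 0 by rewrite /P htp mxtrace_mulC trace_mx11.
have trQ : \tr Q = (adj b *m b) 0 0 by rewrite /Q htp mxtrace_mulC trace_mx11.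
set al := \tr (Z *m G) in hT *; set be := \tr (adj G *m Z') in hT *.
set t := \tr (adj G *m Q *m G) in hT *.
have ht : t = \tr Q - \tr (adj V *m Q *m V).
  rewrite /t mxtrace_mulC mulmxA.
  have -> : G *m adj G = 1%:M - V *m adj V by rewrite -hV opprB addrC subrK.
  by rewrite mulmxBl mul1mx raddfB /= -[in LHS]mulmxA [in LHS]mxtrace_mulC.
have hu := psd_tr V Qpsd.
set u := \tr (adj V *m Q *m V) in ht hu.
have hA := quad_adj_ge0 a 0; have hB := quad_adj_ge0 b 0.
have hs : \tr P + t <= (adj a *m a) 0 0 + (adj b *m b) 0 0.
  by rewrite ht trQ trP lerD2l gerBl.
have sreal : \tr P + t \is Num.real.
  by rewrite ht trQ trP rpredD ?rpredB ?ger0_real.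
have h1 : 0 <= \tr P - al - be + t.
  by have := hT 1; rewrite rmorph1 !mul1r; apply.
have hi : 0 <= \tr P - (- 'i) * al - 'i * be + t.
  by have := hT 'i; rewrite conjCi; apply; rewrite mulNr -expr2 sqrCi opprK.
have r1 : al + be \is Num.real.
  have -> : al + be = (\tr P + t) - (\tr P - al - be + t) by ring.
  by rewrite rpredB // ger0_real.
have r2 : 'i * (al - be) \is Num.real.
  have -> : 'i * (al - be) = (\tr P - (- 'i) * al - 'i * be + t) - (\tr P + t) by ring.
  by rewrite rpredB // ger0_real.
have ebe := conj_pair r1 r2.
rewrite mxtrace_mulC -/al.
have [al0|aln0] := eqVneq al 0.
  by rewrite al0 normr0 mul0rn addr_ge0.
have nn0 : `|al| != 0 by rewrite normr_eq0.
have k1 : (al / `|al|)^* * al = `|al|.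
  by rewrite fmorph_div /= conj_normC mulrAC [al^* * al]mulrC -normCK expr2 mulfK.
have k2 : (al / `|al|) * al^* = `|al|.
  by rewrite mulrAC -normCK expr2 mulfK.
have hth : (al / `|al|)^* * (al / `|al|) = 1.
  by rewrite mulrA k1 mulfV.
have := hT _ hth; rewrite k1 ebe k2 => h.
apply: le_trans hs.
have e : \tr P - `|al| - `|al| + t = (\tr P + t) - `|al| *+ 2 by rewrite mulr2n; ring.
by rewrite e subr_ge0 in h.
Qed.

End R1.

Section CPTP.
Variable C : numClosedFieldType.
Variable n : nat.

Lemma quadZ (c : C) (v : 'cV[C]_n) :
  (adj (c *: v) *m (c *: v)) 0 0 = c^* * c * (adj v *m v) 0 0.
Proof. by rewrite adjmZ -scalemxAl -scalemxAr scalerA [LHS]mxE. Qed.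

Lemma sum_e : \sum_k (delta_mx k 0 : 'cV[C]_n) *m adj (delta_mx k 0 : 'cV[C]_n) = 1%:M.
Proof.
rewrite -diag_const_mx diag_mx_sum_delta; apply: eq_bigr => k _.
rewrite mxE scale1r; apply/matrixP=> i j; rewrite !mxE big_ord1 !mxE.
by case: (i == k); case: (j == k); rewrite ?rmorph1 ?rmorph0 ?mulr1 ?mulr0 ?mul0r.
Qed.

Lemma cptp_contr (F : mapT C n) X : CP F -> trace_preserving F ->
  trnorm (F X) <= trnorm X.
Proof.
move=> hF htp.
have [G [cG e]] := trnorm_dual (F X).
rewrite -[trnorm (F X)]ger0_norm ?trnorm_ge0 // -e.
have [W [d [h1 h2 hN hd ->]]] := XW_spec X.
pose ek k := (delta_mx k 0 : 'cV[C]_n).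
pose t k := sqrtC (sqrtC (d 0 k)).
pose av k := (t k)^-1 *: (X *m W *m ek k).
pose bv k := t k *: (W *m ek k).
have treal : forall k, (t k)^* = t k.
  by move=> k; rewrite conj_Creal // ger0_real // sqrtC_ge0 sqrtC_ge0.
have ht2 : forall k, t k ^+ 2 = sqrtC (d 0 k) by move=> k; rewrite sqrtCK.
have hy : forall k, (adj (X *m W *m ek k) *m (X *m W *m ek k)) 0 0 = d 0 k.
  move=> k; rewrite /ek adjM mulmxA -(mulmxA _ (adj (X *m W))) quad_delta.
  rewrite adjM -mulmxA (mulmxA (adj X)) hN !mulmxA h1 mul1mx -mulmxA h1 mulmx1.
  by rewrite mxE eqxx mulr1n.
have hw : forall k, (adj (W *m ek k) *m (W *m ek k)) 0 0 = 1.
  move=> k; rewrite /ek adjM mulmxA -(mulmxA _ (adj W)) h1 mulmx1.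
  have := quad_delta (1%:M : 'M[C]_n) k; rewrite mulmx1 => ->; by rewrite mxE eqxx.
have eX : X = \sum_k av k *m adj (bv k).
  have -> : \sum_k av k *m adj (bv k) = \sum_k (X *m W *m ek k) *m adj (W *m ek k).
    apply: eq_bigr => k _; rewrite /av /bv adjmZ treal -scalemxAl -scalemxAr scalerA.
    have [t0|tn0] := eqVneq (t k) 0; last by rewrite mulVf // scale1r.
    have y0 : X *m W *m ek k = 0.
      have := hy k; rewrite /t in t0; move/eqP: t0; rewrite !sqrtC_eq0 => /eqP ->.
      move=> /quad_adj_eq0; rewrite colE => <-.
      have e1 : (delta_mx 0 0 : 'M[C]_1) = 1%:M by apply/matrixP=> i j; rewrite !mxE (ord1 i) (ord1 j).
      by rewrite e1 mulmx1.
    by rewrite y0 !mul0mx scaler0.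
  rewrite -[X in X = _]mulmx1 -h2.
  have -> : W *m adj W = W *m (\sum_k ek k *m adj (ek k)) *m adj W by rewrite sum_e mulmx1.
  rewrite mulmx_sumr mulmx_suml mulmx_sumr; apply: eq_bigr => k _.
  by rewrite !adjM !mulmxA.
rewrite {1}eX linS; last exact: hF.1.
rewrite mulmx_sumr raddf_sum /=.
apply: le_trans (ler_norm_sum _ _ _) _.
apply: ler_sum => k _.
have := cp_rank1 (av k) (bv k) hF htp cG.
rewrite /av /bv !quadZ hy hw treal mulr1 -expr2 ht2.
have ha : ((t k)^-1)^* / t k * d 0 k = sqrtC (d 0 k).
  have tv : ((t k)^-1)^* = (t k)^-1 by rewrite conj_Creal // rpredV ger0_real // sqrtC_ge0 sqrtC_ge0.
  rewrite tv -invfM -expr2 ht2 -{2}(sqrtCK (d 0 k)) inv_sq //.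
by rewrite ha -mulr2n lerMn2r.
Qed.

End CPTP.

Section Lam.
Variable C : numClosedFieldType.
Variable n : nat.

Lemma psdD (X Y : 'M[C]_n) : psd X -> psd Y -> psd (X + Y).
Proof.
move=> hX hY v; have := hX v; have := hY v.
rewrite -!trace_mx11 mulmxDr mulmxDl mxtraceD => a b.
by rewrite addr_ge0.
Qed.

Lemma psd_tr0 (P : 'M[C]_n) : psd P -> 0 <= \tr P.
Proof. by move=> hP; have := psd_tr 1%:M hP; rewrite adjm1 mul1mx mulmx1. Qed.

Lemma quad2 (M : 'M[C]_n) a b :
  (adj (delta_mx a 0 : 'cV[C]_n) *m M *m (delta_mx b 0 : 'cV[C]_n)) 0 0 = M a b.
Proof.
have -> : adj (delta_mx a 0 : 'cV[C]_n) = (delta_mx 0 a : 'rV[C]_n).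
  apply/matrixP=> i k; rewrite !mxE.
  by rewrite rmorph_nat andbC.
by rewrite -(rowE a M) -(colE b (row a M)) !mxE.
Qed.

Lemma quad_lin (M : 'M[C]_n) (x y : 'cV[C]_n) (c : C) :
  (adj (x + c *: y) *m M *m (x + c *: y)) 0 0 =
  (adj x *m M *m x) 0 0 + c * (adj x *m M *m y) 0 0 + c^* * (adj y *m M *m x) 0 0
  + c^* * c * (adj y *m M *m y) 0 0.
Proof.
rewrite -!trace_mx11 adjD adjmZ !mulmxDl !mulmxDr.
rewrite -!scalemxAl -!scalemxAr !mxtraceD !mxtraceZ; ring.
Qed.

Lemma herm_of_real (M : 'M[C]_n) :
  (forall v : 'cV[C]_n, (adj v *m M *m v) 0 0 \is Num.real) -> adj M = M.
Proof.
move=> hr; apply/matrixP=> i j; rewrite adjE.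
pose ei := (delta_mx i 0 : 'cV[C]_n); pose ej := (delta_mx j 0 : 'cV[C]_n).
have ri : M i i \is Num.real by have := hr ei; rewrite quad2.
have rj : M j j \is Num.real by have := hr ej; rewrite quad2.
have h1 := hr (ei + 1 *: ej); rewrite quad_lin !quad2 rmorph1 !mul1r in h1.
have h2 := hr (ei + 'i *: ej); rewrite quad_lin !quad2 conjCi in h2.
have ii : - 'i * 'i = 1 :> C by rewrite mulNr -expr2 sqrCi opprK.
rewrite ii mul1r in h2.
have r1 : M j i + M i j \is Num.real.
  have -> : M j i + M i j = (M i i + M i j + M j i + M j j) - M j j - M i i by ring.
  by rewrite !rpredB.
have r2 : 'i * (M j i - M i j) \is Num.real.
  have -> : 'i * (M j i - M i j) = (M i i + M j j) - (M i i + 'i * M i j + - 'i * M j i + M j j) by ring.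
  by apply: rpredB => //; apply: rpredD.
by rewrite (conj_pair r1 r2).
Qed.

Lemma min_real (I : finType) (f : I -> C) (i0 : I) : (forall i, f i \is Num.real) ->
  exists k, forall i, f k <= f i.
Proof.
move=> hr.
suff : forall s : seq I, s != [::] -> exists2 k, k \in s & forall i, i \in s -> f k <= f i.
  move=> /(_ (enum I)); case.
    by apply/eqP => e; have := mem_enum I i0; rewrite e.
  by move=> k _ hk; exists k => i; apply: hk; rewrite mem_enum.
elim=> [//|x s IH] _.
case: (eqVneq s [::]) => [->|sn].
  by exists x; rewrite ?inE // => i; rewrite inE => /eqP ->.
have [k ks hk] := IH sn.
case/orP: (real_leVge (hr x) (hr k)) => hxk.
  exists x; first by rewrite inE eqxx.
  move=> i; rewrite inE => /orP [/eqP ->//|/hk]; exact: le_trans.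
exists k; first by rewrite inE ks orbT.
by move=> i; rewrite inE => /orP [/eqP ->//|/hk].
Qed.

Lemma dual_quad (F : mapT C n) (Y : 'M[C]_n) (v : 'cV[C]_n) : lin_map F ->
  (adj v *m dualm F Y *m v) 0 0 = \tr (Y *m F (v *m adj v)).
Proof.
move=> hF.
rewrite {1}(matrix_sum_delta (v *m adj v)) (linS hF) mulmx_sumr raddf_sum /=.
under [RHS]eq_bigr do rewrite (linS hF) mulmx_sumr raddf_sum /=.
under [RHS]eq_bigr do under eq_bigr do rewrite (linZ hF) -scalemxAr mxtraceZ.
rewrite mxE; apply: eq_bigr => j _; rewrite mxE mulr_suml; apply: eq_bigr => i _.
by rewrite !mxE big_ord1 !mxE; ring.
Qed.

Lemma lam_ge1 (Ap T R : mapT C n) (lam : C) (xi : 'M[C]_n) :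
  lin_map Ap -> (forall X, Ap X = T X + R X) -> (forall X, \tr (T X) = \tr X) ->
  (forall X, psd X -> psd (Ap X)) -> (forall X, psd X -> psd (R X)) ->
  (0 < n)%N -> posdef xi -> dualm Ap xi = lam *: xi -> 1 <= lam.
Proof.
move=> hl hAp hT hpA hpR n0 hxi hdual.
have hx : adj xi = xi.
  apply: herm_of_real => v; have [->|vn0] := eqVneq v 0.
    by rewrite mulmx0 mxE.
  by apply: ger0_real; apply: ltW; apply: hxi.
have [W [d [h1 h2 hW]]] := herm_spectral hx.
pose ek k := (delta_mx k 0 : 'cV[C]_n).
have hq : forall k, (adj (W *m ek k) *m xi *m (W *m ek k)) 0 0 = d 0 k.
  move=> k; rewrite /ek adjM hW !mulmxA -(mulmxA _ (adj W) W) h1 mulmx1.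
  by rewrite -(mulmxA _ (adj W) W) h1 mulmx1 quad2 mxE eqxx.
have hw : forall k, (adj (W *m ek k) *m (W *m ek k)) 0 0 = 1.
  move=> k; rewrite /ek adjM mulmxA -(mulmxA _ (adj W)) h1 mulmx1.
  by have := quad2 (1%:M : 'M[C]_n) k k; rewrite mulmx1 => ->; rewrite mxE eqxx.
have wn0 : forall k, W *m ek k != 0.
  move=> k; apply/eqP => e0; have := hw k; rewrite e0 adj0 mul0mx mxE => /eqP.
  by rewrite eq_sym oner_eq0.
have dpos : forall k, 0 < d 0 k by move=> k; rewrite -hq; apply: hxi.
have [k0 hk0] := @min_real _ (fun k => d 0 k) (Ordinal n0) (fun k => gtr0_real (dpos k)).
set m := d 0 k0 in hk0.
set v := W *m ek k0.
pose V := W *m diag_mx (\row_k sqrtC (d 0 k - m)).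
have hV : xi = V *m adj V + m%:M.
  rewrite /V adjM adj_diag mulmxA -(mulmxA W) diagM.
  have -> : (m%:M : 'M[C]_n) = W *m m%:M *m adj W.
    by rewrite -scalemx1 -scalemxAr -scalemxAl mulmx1 h2.
  rewrite -mulmxDl -mulmxDr hW; congr (_ *m _ *m _).
  apply/matrixP=> i j; rewrite !mxE.
  case: (eqVneq i j) => [->|ne]; last by rewrite !mulr0n addr0.
  rewrite !mulr1n conj_Creal ?sqrtC_real ?subr_ge0 // -expr2 sqrtCK.
  by rewrite subrK.
set rho := v *m adj v.
have prho : psd rho.
  move=> w; rewrite /rho mulmxA -mulmxA -trace_mx11 mxtrace_mulC trace_mx11.
  have -> : adj v *m w = adj (adj w *m v) by rewrite adjM adjK.
  exact: quad_adj_ge0.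
have key : lam * m = \tr (xi *m Ap rho).
  rewrite -dual_quad // hdual -scalemxAr -scalemxAl mxE -/v.
  by rewrite /v hq.
have hP := hpA _ prho.
have t1 : 0 <= \tr (V *m adj V *m Ap rho).
  rewrite -mulmxA mxtrace_mulC; exact: (psd_tr V hP).
have t2 : 1 <= \tr (Ap rho).
  rewrite hAp mxtraceD hT /rho mxtrace_mulC trace_mx11 /v hw lerDl.
  exact: psd_tr0 (hpR _ prho).
have mpos : 0 < m := dpos k0.
have : 1 * m <= lam * m.
  rewrite key {1}hV mulmxDl mxtraceD mul_scalar_mx mxtraceZ.
  have e1 : m <= m * \tr (Ap rho) by rewrite -{1}(mulr1 m) ler_wpM2l // ltW.
  by rewrite mul1r; apply: le_trans e1 _; rewrite lerDr.
by rewrite ler_pM2r.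
Qed.

End Lam.



Section Main.
Variable C : numClosedFieldType.
Variable n : nat.
Implicit Types F H : mapT C n.

Lemma max_props (x y : C) : 0 <= x -> 0 <= y ->
  [/\ 0 <= Num.max x y, x <= Num.max x y & y <= Num.max x y].
Proof.
move=> x0 y0.
have : Num.max x y = if x < y then y else x by [].
move=> ->; case: ifP => [/ltW xy|nxy]; split => //.
case/orP: (real_leVge (ger0_real x0) (ger0_real y0)) => // xy.
by move: nxy; rewrite lt_neqAle xy andbT => /negbFE/eqP ->.
Qed.

Lemma lin_comp F H : lin_map F -> lin_map H -> lin_map (compm F H).
Proof. by move=> hF hH a x y; rewrite /compm hH hF. Qed.

Lemma lin_add F H : lin_map F -> lin_map H -> lin_map (addm F H).
Proof. by move=> hF hH a x y; rewrite /addm hF hH scalerDr addrACA. Qed.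

Definition posm F := forall X, psd X -> psd (F X).

Lemma pos_comp F H : posm F -> posm H -> posm (compm F H).
Proof. by move=> hF hH X hX; apply: hF; apply: hH. Qed.

Lemma pos_add F H : posm F -> posm H -> posm (addm F H).
Proof. by move=> hF hH X hX; apply: psdD; [apply: hF|apply: hH]. Qed.

Lemma acl (V : zmodType) (a p q s u : V) : a + p + (q + s) + u - a = p + q + s + u.
Proof. by rewrite addrAC !addrA (addrAC _ s (-a)) (addrAC _ q (-a)) [a + p]addrC addrK. Qed.

Lemma nl_eqb F (a b : C) : a = b -> norm11_le F a -> norm11_le F b.
Proof. by move=> ->. Qed.

Lemma nl_leb F (a b : C) : norm11_le F a -> a <= b -> norm11_le F b.
Proof. by move=> h ab; apply: nl_mono ab h. Qed.

End Main.

Unset Implicit Arguments.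

Theorem mainTheorem4 (C : numClosedFieldType) (D : nat)
  (A B C' D' : mapT C D) (nB nC nD : C)
  (hA : CP A) (hAtp : trace_preserving A)
  (hB : CP B) (hC : CP C') (hD : CP D')
  (hnB : is_norm11 B nB) (hnC : is_norm11 C' nC) (hnD : is_norm11 D' nD) :
  let eps := Num.max nB (Num.max nC nD) in
  let Ap := addm (sqm (addm (sqm A) (sqm B))) (sqm (addm (sqm C') (sqm D'))) in
  let Bp := addm (sqm (anticomm A B)) (sqm (anticomm C' D')) in
  let Cp := anticomm (addm (sqm A) (sqm B)) (addm (sqm C') (sqm D')) in
  let Dp := anticomm (anticomm A B) (anticomm C' D') in
  [/\ (* 1 *)
      norm11_le Bp (4 * (eps ^+ 2 + eps ^+ 4)) /\
      norm11_le Cp (4 * (eps ^+ 2 + eps ^+ 4)) /\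
      norm11_le Dp (4 * (eps ^+ 2 + eps ^+ 4)),
      (* 2 *)
      norm11_le (subm Ap (sqm (sqm A))) (2 * eps ^+ 2 + 5 * eps ^+ 4)
    & (* 3 *)
      forall (lam : C) (xi R : 'M[C]_D) (nS nSi : C),
        is_spectral_radius Ap lam ->
        posdef xi -> dualm Ap xi = lam *: xi ->
        psd R -> R *m R = xi ->
        let S : mapT C D := fun rho => R *m rho *m R in
        let Si : mapT C D := fun rho => invmx R *m rho *m invmx R in
        is_norm11 S nS -> is_norm11 Si nSi ->
        let new (X : mapT C D) : mapT C D :=
          fun rho => lam^-1 *: S (X (Si rho)) in
        1 <= lam /\
        norm11_le (new Bp) (4 * (nS * nSi) * (eps ^+ 2 + eps ^+ 4)) /\
        norm11_le (new Cp) (4 * (nS * nSi) * (eps ^+ 2 + eps ^+ 4)) /\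
        norm11_le (new Dp) (4 * (nS * nSi) * (eps ^+ 2 + eps ^+ 4))].
Proof.
move=> eps Ap Bp Cp Dp.
have [nB0 [hB1 _]] := hnB; have [nC0 [hC1 _]] := hnC; have [nD0 [hD1 _]] := hnD.
have [m0 mC mD] := max_props nC0 nD0.
have [e0 eB eM] := max_props nB0 m0.
have eC : nC <= eps := le_trans mC eM.
have eD : nD <= eps := le_trans mD eM.
have hAn : norm11_le A 1 by move=> s; rewrite mul1r; apply: cptp_contr.
have hBn : norm11_le B eps := nl_mono eB hB1.
have hCn : norm11_le C' eps := nl_mono eC hC1.
have hDn : norm11_le D' eps := nl_mono eD hD1.
have ab : norm11_le (anticomm A B) (1 * eps + eps * 1).
  by apply: nl_add; apply: nl_comp.
have cd : norm11_le (anticomm C' D') (eps * eps + eps * eps).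
  by apply: nl_add; apply: nl_comp.
have ab0 : 0 <= 1 * eps + eps * 1 by rewrite addr_ge0 ?mulr_ge0.
have cd0 : 0 <= eps * eps + eps * eps by rewrite addr_ge0 ?mulr_ge0.
have a2 : norm11_le (addm (sqm A) (sqm B)) (1 * 1 + eps * eps).
  by apply: nl_add; apply: nl_comp.
have c2 : norm11_le (addm (sqm C') (sqm D')) (eps * eps + eps * eps).
  by apply: nl_add; apply: nl_comp.
have a20 : 0 <= 1 * 1 + eps * eps by rewrite addr_ge0 ?mulr_ge0.
have hBp : norm11_le Bp (4 * (eps ^+ 2 + eps ^+ 4)).
  apply: nl_eqb (nl_add (nl_comp ab ab ab0) (nl_comp cd cd cd0)); ring.
have hCp : norm11_le Cp (4 * (eps ^+ 2 + eps ^+ 4)).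
  apply: nl_eqb (nl_add (nl_comp a2 c2 a20) (nl_comp c2 a2 cd0)); ring.
have hDp : norm11_le Dp (4 * (eps ^+ 2 + eps ^+ 4)).
  apply: nl_leb (nl_add (nl_comp ab cd ab0) (nl_comp cd ab cd0)) _.
  rewrite -subr_ge0.
  have -> : 4 * (eps ^+ 2 + eps ^+ 4) - ((1 * eps + eps * 1) * (eps * eps + eps * eps) +
     (eps * eps + eps * eps) * (1 * eps + eps * 1)) = 4 * (eps * (eps - 1)) ^+ 2 by ring.
  rewrite mulr_ge0 // real_exprn_even_ge0 // rpredM ?rpredB ?ger0_real //.
pose Hm := addm (addm (addm (compm (sqm A) (sqm B)) (compm (sqm B) (sqm A)))
     (compm (sqm B) (sqm B))) (sqm (addm (sqm C') (sqm D'))).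
have e2 : forall x, subm Ap (sqm (sqm A)) x = Hm x.
  move=> x; rewrite /subm /Ap /Hm /addm /sqm /compm !(linD hA.1) !(linD hB.1).
  exact: acl.
have hA2 : norm11_le (sqm A) (1 * 1) by apply: nl_comp.
have hB2 : norm11_le (sqm B) (eps * eps) by apply: nl_comp.
have hHm : norm11_le Hm (2 * eps ^+ 2 + 5 * eps ^+ 4).
  apply: nl_eqb (nl_add (nl_add (nl_add (nl_comp hA2 hB2 _) (nl_comp hB2 hA2 _))
            (nl_comp hB2 hB2 _)) (nl_comp c2 c2 cd0)); rewrite ?mulr_ge0 //.
  ring.
split => //; first exact: nl_ext (fun x => esym (e2 x)) hHm.
move=> lam xi R nS nSi hsr hxi hdual hR hRR S Si hnS hnSi new.
have Dpos : (0 < D)%N.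
  have aux : forall m (X : 'M[C]_m), X != 0 -> (0 < m)%N.
    by case=> // X; rewrite flatmx0 eqxx.
  by case: hsr => [[l [[X [Xn0 _]] _]] _]; exact: aux Xn0.
have lA := hA.1; have lB := hB.1; have lC := hC.1; have lD := hD.1.
have lT : lin_map (addm (sqm A) (sqm B)) by apply: lin_add; apply: lin_comp.
have lU : lin_map (addm (sqm C') (sqm D')) by apply: lin_add; apply: lin_comp.
have lAp : lin_map Ap by apply: lin_add; apply: lin_comp.
have pA : posm A by move=> X; apply: CP_psd.
have pB : posm B by move=> X; apply: CP_psd.
have pC : posm C' by move=> X; apply: CP_psd.
have pD : posm D' by move=> X; apply: CP_psd.
have pT : posm (addm (sqm A) (sqm B)) by apply: pos_add; apply: pos_comp.
have pU : posm (addm (sqm C') (sqm D')) by apply: pos_add; apply: pos_comp.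
have pAp : posm Ap by apply: pos_add; apply: pos_comp.
have pA2 : posm (sqm A) by apply: pos_comp.
have pB2 : posm (sqm B) by apply: pos_comp.
have pHm : posm Hm.
  by apply: pos_add; [apply: pos_add; [apply: pos_add|]|]; apply: pos_comp.
have lam1 : 1 <= lam.
  apply: (@lam_ge1 _ _ Ap (sqm (sqm A)) Hm lam xi) => //.
  - by move=> X; rewrite -e2 /subm addrC subrK.
  - by move=> X; rewrite /sqm /compm !hAtp.
have lam0 : 0 < lam by apply: lt_le_trans lam1; exact: ltr01.
have [nS0 [hS1 _]] := hnS; have [nSi0 [hSi1 _]] := hnSi.
have K0 : 0 <= 4 * (eps ^+ 2 + eps ^+ 4) by rewrite mulr_ge0 ?addr_ge0 ?exprn_ge0.
have newb : forall X, norm11_le X (4 * (eps ^+ 2 + eps ^+ 4)) ->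
    norm11_le (new X) (4 * (nS * nSi) * (eps ^+ 2 + eps ^+ 4)).
  move=> X hX.
  have h := nl_scale lam^-1 (nl_comp hS1 (nl_comp hX hSi1 K0) nS0).
  apply: nl_leb (nl_ext (fun x => erefl) h) _.
  rewrite ger0_norm; last by rewrite invr_ge0 ltW.
  have -> : 4 * (nS * nSi) * (eps ^+ 2 + eps ^+ 4) = nS * (4 * (eps ^+ 2 + eps ^+ 4) * nSi) by ring.
  apply: ler_piMl; first by rewrite mulr_ge0 // mulr_ge0.
  by rewrite invf_le1.
by split => //; split; [exact: newb|split; exact: newb].
Qed.
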